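(* Let $V$ be a finite-dimensional real vector space with $\dim V\neq 2$, and let $F\in\Lambda^2V^*$. Then there is a scalar product (nondegenerate symmetric bilinear form) on $V$ of index $0$ or $1$ such that $F$ is isotropic, i.e. $g(F,F)=0$ for the induced scalar product on $\Lambda^2V^*$. Furthermore, if $V=U\oplus W$ with $\dim U=\dim W$ and $F\in U^*\wedge W^*$, then the scalar product can be chosen so that, in addition, $U$ and $W$ are isotropic subspaces.
   Context: The index of a scalar product of signature $(p,q)$ is $p-q$. For $V=U\oplus W$, $U^*$ (resp. $W^*$) denotes the forms vanishing on $W$ (resp. $U$), and $U^*\wedge W^*$ is the image of $U^*\otimes W^*$ in $\Lambda^2V^*$. A subspace is isotropic if the scalar product restricts to zero on it. *)

(* Defs.v *)
(* V = R^n as row vectors 'rV[R]_n, R : realType (the reals). *)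
From HB Require Import structures.
From mathcomp Require Import all_boot all_order all_algebra.
From mathcomp Require Import reals.
Set Implicit Arguments. Unset Strict Implicit. Unset Printing Implicit Defensive.
Import Order.TTheory GRing.Theory Num.Theory.
Local Open Scope ring_scope.

Section Defs.
Variables (R : realType) (n : nat).

(* A bilinear form on V = 'rV_n is a matrix G : g(u,v) = (u *m G *m v^T) 0 0.
   A scalar product: symmetric and nondegenerate. *)
Definition scalar_product (G : 'M[R]_n) : Prop :=
  G^T = G /\ G \in unitmx.

Definition pos_def_on (G S : 'M[R]_n) : Prop :=
  forall v : 'rV[R]_n, (v <= S)%MS -> v != 0 -> 0 < (v *m G *m v^T) 0 0.
Definition neg_def_on (G S : 'M[R]_n) : Prop :=
  forall v : 'rV[R]_n, (v <= S)%MS -> v != 0 -> (v *m G *m v^T) 0 0 < 0.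

Definition is_pos_index (G : 'M[R]_n) (p : nat) : Prop :=
  (exists S, \rank S = p /\ pos_def_on G S) /\
  (forall S, pos_def_on G S -> (\rank S <= p)%N).
Definition is_neg_index (G : 'M[R]_n) (q : nat) : Prop :=
  (exists S, \rank S = q /\ neg_def_on G S) /\
  (forall S, neg_def_on G S -> (\rank S <= q)%N).

Definition has_index (G : 'M[R]_n) (k : int) : Prop :=
  exists p q : nat, is_pos_index G p /\ is_neg_index G q /\ p%:Z - q%:Z = k.

(* 2-forms on V: skew-symmetric matrices F, F(u,v) = (u *m F *m v^T) 0 0. *)
Definition two_form (F : 'M[R]_n) : Prop := F^T = - F.

(* induced scalar product on Lambda^2 V^* (inverse metric g^{ij} = invmx G):
   g(A,B) = sum_{i,j,k,l} g^{ik} g^{jl} A_{ij} B_{kl}  (normalisation irrelevant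
   for isotropy). *)
Definition l2dot (G A B : 'M[R]_n) : R :=
  \sum_(i < n) \sum_(j < n) \sum_(k < n) \sum_(l < n)
     invmx G i k * invmx G j l * A i j * B k l.

(* Linear forms on V are column vectors a : 'cV_n, a(v) = (v *m a) 0 0.
   a /\ b as a 2-form: a b^T - b a^T. *)
Definition wedge (a b : 'cV[R]_n) : 'M[R]_n := a *m b^T - b *m a^T.

(* F lies in U^* /\ W^*, the image of U^* (x) W^* in Lambda^2 V^*, where
   U^* = forms vanishing on W and W^* = forms vanishing on U. *)
Definition in_wedge (U W F : 'M[R]_n) : Prop :=
  exists (m : nat) (a b : 'I_m -> 'cV[R]_n),
    (forall k, W *m a k = 0) /\ (forall k, U *m b k = 0) /\
    F = \sum_(k < m) wedge (a k) (b k).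

Definition isotropic (G U : 'M[R]_n) : Prop := U *m G *m U^T = 0.

End Defs.

(* Main.v *)
Require Import Defs.
From HB Require Import structures.
From mathcomp Require Import all_boot all_order all_algebra.
From mathcomp Require Import reals fingroup perm.
From mathcomp Require Import ring lra zify.
Import Order.TTheory GRing.Theory Num.Theory.
Set Implicit Arguments. Unset Strict Implicit. Unset Printing Implicit Defensive.
Local Open Scope ring_scope.

Ltac bsimp := rewrite ?(mul_col_mx, mul_row_block, mul_row_col, mul_mx_row, mul_col_row,
  mulmx0, mul0mx, mulmx1, mul1mx, addr0, add0r, mulNmx, mulmxN, row_mx0, col_mx0,
  add_row_mx, add_col_mx, opp_row_mx, opp_col_mx, oppr0, opprK).

Section Gen.
Variable R : realType.

Lemma sqnorm_gt0 k (v : 'rV[R]_k) : v != 0 -> 0 < (v *m v^T) 0 0.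
Proof.
move=> vn0; rewrite mxE.
have [j vj] : exists j, v 0 j != 0.
  apply/existsP; apply: contraR vn0 => /existsPn H; apply/eqP/matrixP => i j.
  by rewrite (ord1 i) mxE; apply/eqP; move: (H j); rewrite negbK.
under eq_bigr do rewrite mxE -expr2.
rewrite (bigD1 j) //= ltr_pwDl //; first by rewrite lt_def sqr_ge0 andbT expf_eq0.
by apply: sumr_ge0 => i _; rewrite sqr_ge0.
Qed.

Lemma neg_pos k (G S : 'M[R]_k) : neg_def_on G S <-> pos_def_on (-G) S.
Proof.
rewrite /neg_def_on /pos_def_on; split=> H v vS vn0; have := H v vS vn0;
  by rewrite mulmxN mulNmx [X in 0 < X]mxE oppr_gt0.
Qed.

Lemma pos_index_witness k (H : 'M[R]_k) (Sp Sn : 'M[R]_k) p :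
  pos_def_on H Sp -> pos_def_on (-H) Sn -> \rank Sp = p -> (p + \rank Sn)%N = k ->
  is_pos_index H p.
Proof.
move=> Hp Hn rp rk; split; first by exists Sp.
move=> S HS.
have cap0 : (S :&: Sn)%MS = 0.
  apply/eqP; rewrite -submx0; apply/rV_subP => v; rewrite sub_capmx => /andP[vS vN].
  rewrite submx0; apply/negPn/negP => vn0.
  have := HS v vS vn0; have := Hn v vN vn0.
  by rewrite mulmxN mulNmx [X in 0 < X]mxE oppr_gt0 => /ltW; rewrite leNgt => /negbTE ->.
have := mxrank_disjoint_sum cap0; have := rank_leq_col (S + Sn)%MS.
move=> h1 h2; rewrite h2 in h1; lia.
Qed.

Lemma quad_conj n k (v : 'rV[R]_n) (A : 'M[R]_(n,k)) (H : 'M[R]_k) :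
  v *m (A *m H *m A^T) *m v^T = (v *m A) *m H *m (v *m A)^T.
Proof. by rewrite trmx_mul !mulmxA. Qed.

Lemma pos_transfer k n (H : 'M[R]_k) (A : 'M[R]_(n,k)) (C : 'M[R]_(k,n)) p :
  C *m A = 1%:M -> A *m C = 1%:M -> is_pos_index H p ->
  is_pos_index (A *m H *m A^T) p.
Proof.
move=> CA AC [[S' [rS' pS']] bnd].
have Cfree : row_free C by apply/row_freeP; exists A.
have Afree : row_free A by apply/row_freeP; exists C.
split.
  exists <<S' *m C>>%MS; split; first by rewrite mxrank_gen mxrankMfree.
  move=> v; rewrite genmxE => /submxP [x ->] vn0.
  rewrite quad_conj; have -> : x *m (S' *m C) *m A = x *m S'.
    by rewrite -!mulmxA CA mulmx1.
  apply: pS'; first exact: submxMl.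
  by apply: contraNneq vn0 => h; rewrite mulmxA h mul0mx.
move=> S pS; rewrite -(mxrankMfree S Afree) -mxrank_gen; apply: bnd.
move=> v; rewrite genmxE => /submxP [x ->] vn0.
have := pS (x *m S) (submxMl _ _); rewrite quad_conj !mulmxA; apply.
by apply: contraNneq vn0 => h; rewrite mulmxA h mul0mx.
Qed.

Lemma is_neg_pos k (G : 'M[R]_k) q : is_neg_index G q <-> is_pos_index (-G) q.
Proof.
split=> [[[S [rS nS]] bnd] | [[S [rS nS]] bnd]]; split.
- by exists S; split=> //; apply/neg_pos.
- by move=> S' /neg_pos; apply: bnd.
- by exists S; split=> //; apply/neg_pos.
- by move=> S' /neg_pos; apply: bnd.
Qed.

Lemma index_transfer k n (H : 'M[R]_k) (A : 'M[R]_(n,k)) (C : 'M[R]_(k,n)) s :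
  C *m A = 1%:M -> A *m C = 1%:M -> has_index H s ->
  has_index (A *m H *m A^T) s.
Proof.
move=> CA AC [p [q [hp [hq e]]]]; exists p, q; split; last split => //.
  by eapply pos_transfer; eauto.
apply/is_neg_pos; rewrite -mulNmx -mulmxN; eapply pos_transfer; eauto.
exact/is_neg_pos.
Qed.



Lemma pos_def_gen k p (H : 'M[R]_k) (M : 'M[R]_(p, k)) :
  M *m H = M -> pos_def_on H <<M>>%MS.
Proof.
move=> MH v; rewrite genmxE => /submxP [x ->] vn0.
by rewrite -(mulmxA x M H) MH; apply: sqnorm_gt0.
Qed.

Lemma rank_rinv p k (M : 'M[R]_(p, k)) (Rr : 'M[R]_(k, p)) :
  M *m Rr = 1%:M -> \rank <<M>>%MS = p.
Proof.
move=> h; rewrite mxrank_gen; apply/eqP; rewrite -/(row_free M).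
by apply/row_freeP; exists Rr.
Qed.

End Gen.
Section Model.
Variable R : realType.
Variables m d : nat.

Definition Hm : 'M[R]_(m + (m + d)) :=
  block_mx 0 (row_mx 1%:M 0) (col_mx 1%:M 0) (block_mx 0 0 0 1%:M).
Definition Mp : 'M[R]_(m + d, m + (m + d)) :=
  col_mx (row_mx 1%:M (row_mx 1%:M 0)) (row_mx 0 (row_mx 0 1%:M)).
Definition Mn : 'M[R]_(m, m + (m + d)) := row_mx 1%:M (row_mx (- 1%:M) 0).



Lemma MpH : Mp *m Hm = Mp.
Proof. rewrite /Mp /Hm. bsimp. by []. Qed.

Lemma MnH : Mn *m Hm = - Mn.
Proof. rewrite /Mn /Hm. bsimp. by []. Qed.

Lemma HmH : Hm *m Hm = 1%:M.
Proof.
rewrite /Hm mulmx_block. bsimp. by rewrite -block_mxEv -!scalar_mx_block.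
Qed.

Lemma Hm_sym : Hm^T = Hm.
Proof. by rewrite /Hm ?(tr_block_mx, tr_row_mx, tr_col_mx, trmx0, trmx1). Qed.


Definition Rp : 'M[R]_(m + (m + d), m + d) :=
  col_mx (row_mx 1%:M 0) (col_mx 0 (row_mx 0 1%:M)).
Definition Rn : 'M[R]_(m + (m + d), m) := col_mx 1%:M 0.

Lemma MpRp : Mp *m Rp = 1%:M.
Proof. rewrite /Mp /Rp. bsimp. by rewrite -block_mxEv -scalar_mx_block. Qed.

Lemma MnRn : Mn *m Rn = 1%:M.
Proof. rewrite /Mn /Rn. bsimp. by []. Qed.

Lemma Hm_index : has_index Hm d.
Proof.
have pp : pos_def_on Hm <<Mp>>%MS by apply: pos_def_gen; exact: MpH.
have pn : pos_def_on (- Hm) <<Mn>>%MS.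
  by apply: pos_def_gen; rewrite mulmxN MnH opprK.
have rp := rank_rinv MpRp; have rn := rank_rinv MnRn.
exists (m + d)%N, m; split; last split.
- apply: (pos_index_witness pp pn rp); rewrite rn; lia.
- apply/is_neg_pos.
  have pp' : pos_def_on (- - Hm) <<Mp>>%MS by rewrite opprK.
  apply: (pos_index_witness pn pp' rn); rewrite rp; lia.
- by rewrite PoszD addrC addKr.
Qed.


Lemma Hm_ul : row_mx 1%:M 0 *m Hm *m (row_mx (1%:M : 'M[R]_m) 0)^T = 0.
Proof. rewrite /Hm tr_row_mx trmx1 trmx0. bsimp. by []. Qed.

Lemma Hm_dr : row_mx 0 1%:M *m Hm *m (row_mx 0 (1%:M : 'M[R]_(m + d)))^T =
   block_mx 0 0 0 1%:M.
Proof. rewrite /Hm tr_row_mx trmx1 trmx0. bsimp. by []. Qed.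

End Model.

Lemma l2dot_tr (R : realType) n (G A B : 'M[R]_n) :
  l2dot G A B = \tr (A^T *m (invmx G *m B *m (invmx G)^T)).
Proof.
set K := invmx G.
rewrite /l2dot /mxtrace.
transitivity (\sum_(i < n) \sum_(j < n) A i j * (\sum_(k < n) \sum_(l < n) K i k * B k l * K j l)).
  apply: eq_bigr => i _; apply: eq_bigr => j _; rewrite mulr_sumr; apply: eq_bigr => k _.
  rewrite mulr_sumr; apply: eq_bigr => l _; rewrite /K; ring.
rewrite exchange_big; apply: eq_bigr => j _; rewrite mxE; apply: eq_bigr => i _.
rewrite [A^T j i]mxE; congr (_ * _); rewrite [RHS]mxE exchange_big; apply: eq_bigr => l _.
rewrite [(K *m B) i l]mxE mulr_suml; apply: eq_bigr => k _; rewrite [K^T l j]mxE; ring.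
Qed.

Section Core.
Variable R : realType.
Variables n m d : nat.
Variable F : 'M[R]_n.
Variable Ub : 'M[R]_(m, n).
Variable Wb : 'M[R]_(m + d, n).
Variable Bc : 'M[R]_(n, m + (m + d)).
Let Pc := col_mx Ub Wb.
Hypothesis PB : Pc *m Bc = 1%:M.
Hypothesis BP : Bc *m Pc = 1%:M.
Hypothesis Fskew : F^T = - F.
Hypothesis Wiso : Wb *m F *m Wb^T = 0.
Let N := Ub *m F *m Wb^T.
Hypothesis Ntr : \tr (lsubmx N *m lsubmx N) = 0.

Let G := Bc *m Hm R m d *m Bc^T.
Let H := Pc^T *m Hm R m d *m Pc.

Lemma core_HG : H *m G = 1%:M.
Proof.
rewrite /H /G !mulmxA -[_ *m Pc *m Bc]mulmxA PB mulmx1.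
rewrite -[_ *m Hm R m d *m Hm R m d]mulmxA HmH mulmx1.
by rewrite -trmx_mul BP trmx1.
Qed.

Lemma core_unit : G \in unitmx.
Proof. by case: (mulmx1_unit core_HG). Qed.

Lemma core_inv : invmx G = H.
Proof. by rewrite -[invmx G]mul1mx -core_HG mulmxK // core_unit. Qed.

Lemma core_sym : G^T = G.
Proof. by rewrite /G !trmx_mul trmxK Hm_sym mulmxA. Qed.

Lemma core_index : has_index G d.
Proof. by apply: (index_transfer PB BP); apply: Hm_index. Qed.

Lemma core_Uiso : Ub *m G *m Ub^T = 0.
Proof.
have -> : Ub = row_mx 1%:M 0 *m Pc by rewrite /Pc mul_row_col mul1mx mul0mx addr0.
rewrite /G !trmx_mul !mulmxA -[_ *m Pc *m Bc]mulmxA PB mulmx1.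
rewrite -[_ *m Bc^T *m Pc^T]mulmxA -trmx_mul PB trmx1 mulmx1.
exact: Hm_ul.
Qed.

Lemma core_Wiso : Wb *m G *m Wb^T = block_mx 0 0 0 1%:M.
Proof.
have -> : Wb = row_mx 0 1%:M *m Pc by rewrite /Pc mul_row_col mul1mx mul0mx add0r.
rewrite /G !trmx_mul !mulmxA -[_ *m Pc *m Bc]mulmxA PB mulmx1.
rewrite -[_ *m Bc^T *m Pc^T]mulmxA -trmx_mul PB trmx1 mulmx1.
exact: Hm_dr.
Qed.


Lemma core_l2 : l2dot G F F = 0.
Proof.
have HT : H^T = H by rewrite /H !trmx_mul trmxK Hm_sym mulmxA.
rewrite l2dot_tr core_inv HT.
have -> : \tr (F^T *m (H *m F *m H)) =
   \tr ((Pc *m F^T *m Pc^T) *m Hm R m d *m (Pc *m F *m Pc^T) *m Hm R m d).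
  by rewrite /H !mulmxA mxtrace_mulC !mulmxA.
have E1 : Pc *m F *m Pc^T = block_mx (Ub *m F *m Ub^T) N (- N^T) 0.
  rewrite /Pc tr_col_mx mul_col_mx mul_col_row Wiso /N !trmx_mul trmxK Fskew.
  by rewrite mulNmx mulmxN opprK mulmxA.
rewrite Fskew mulmxN mulNmx E1.
set F1 := Ub *m F *m Ub^T.
set X : 'M[R]_(m, m + d) := row_mx 1%:M 0.
set T : 'M[R]_(m + d) := block_mx 0 0 0 1%:M.
have EH : Hm R m d = block_mx 0 X X^T T by rewrite /Hm /X tr_row_mx trmx1 trmx0.
set Fb := block_mx F1 N (- N^T) 0.
have EM : Fb *m Hm R m d = block_mx (N *m X^T) (F1 *m X + N *m T) 0 (- (N^T *m X)).
  by rewrite EH /Fb mulmx_block !mulmx0 !mul0mx !addr0 !add0r !mulNmx.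
rewrite -[_ *m Fb *m Hm R m d]mulmxA !mulNmx EM mulmx_block !mulmx0 !mul0mx !addr0.
have trN : forall k (A : 'M[R]_k), \tr (- A) = - \tr A.
  by move=> k A; rewrite /mxtrace -sumrN; apply: eq_bigr => i _; rewrite mxE.
rewrite add0r !mulNmx !mulmxN opprK trN mxtrace_block.
have T2 : \tr (N^T *m X *m (N^T *m X)) = \tr (N *m X^T *m (N *m X^T)).
  rewrite -mxtrace_tr !trmx_mul !trmxK -!mulmxA mxtrace_mulC !mulmxA. done.
have NX : N *m X^T = lsubmx N.
  by rewrite /X tr_row_mx trmx1 trmx0 -{1}(hsubmxK N) mul_row_col mulmx1 mulmx0 addr0.
by rewrite T2 NX Ntr addr0 oppr0.
Qed.


Lemma core_all : exists G : 'M[R]_n,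
  scalar_product G /\ has_index G d /\ l2dot G F F = 0 /\
  Ub *m G *m Ub^T = 0 /\ Wb *m G *m Wb^T = block_mx 0 0 0 1%:M.
Proof.
exists G; split; first by split; [exact: core_sym | exact: core_unit].
split; first exact: core_index.
split; first exact: core_l2.
by split; [exact: core_Uiso | exact: core_Wiso].
Qed.

End Core.
Lemma succ_mod (a M : nat) : (a < M)%N -> (a.+1 %% M = if a.+1 == M then 0 else a.+1)%N.
Proof.
move=> aM; case: eqP => [->|ne]; first by rewrite modnn.
by rewrite modn_small //; lia.
Qed.

Lemma arith_ok (m d r a b : nat) : (a < m)%N -> (b < m)%N -> (a < r)%N -> (b < r)%N -> (r <= m)%N ->
  (d != 0)%N || (m != 1)%N -> ~~ [&& d == 0, r == m & m == 2]%N ->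
  (a.+1 %% (m + d))%N = b -> (b.+1 %% (m + d))%N = a -> False.
Proof.
move=> am bm ar br rm h1 h2.
rewrite succ_mod; last lia. rewrite succ_mod; last lia.
case: eqP => e1; case: eqP => e2 ea eb; move: h1 h2; subst; lia.
Qed.

Section GF.
Variable R : realType.

Lemma pid_perm_E m d r (i : 'I_m) (j : 'I_(m + d)) :
  (pid_mx r *m perm_mx (perm (@ordS_inj (m + d)))) i j =
  ((i < r)%N && (j == (i.+1 %% (m + d))%N :> nat))%:R :> R.
Proof.
rewrite mxE (bigD1 (widen_ord (leq_addr d m) i)) //= big1 ?addr0.
  rewrite !mxE eqxx /= permE.
  by case: (i < r)%N; rewrite ?mul0r ?mul1r // eq_sym -val_eqE.
move=> k /eqP kn; rewrite !mxE.
suff -> : (i == k :> nat) = false by rewrite mul0r.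
by apply/eqP => h; apply: kn; apply: val_inj.
Qed.


Definition L2 : 'M[R]_2 := \matrix_(i, j) (if i == j then 1 else if (i < j)%N then 1 else -1).

Lemma L2_unit : L2 \in unitmx.
Proof.
have h : L2 *m ((2%:R)^-1 *: L2^T) = 1%:M.
  have h2 : (2%:R : R) != 0 by rewrite pnatr_eq0.
  apply/matrixP => i j; rewrite !mxE !big_ord_recl big_ord0 !mxE.
  by case: i => [[|[|i]] Hi]; case: j => [[|[|j]] Hj] //=; field.
by case: (mulmx1_unit h).
Qed.

Lemma special_tr :
  \tr (lsubmx (L2 *m pid_mx 2 *m (1%:M : 'M[R]_(2 + 0))) *m
       lsubmx (L2 *m pid_mx 2 *m (1%:M : 'M[R]_(2 + 0)))) = 0.
Proof.
rewrite /mxtrace; do 4! rewrite ?(big_ord_recl, big_ord0, mxE) /=.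
ring.
Qed.


Lemma good_form m d r : (r <= m)%N -> (d != 0)%N || (m != 1)%N ->
  exists Lz : 'M[R]_m, exists Rz : 'M[R]_(m + d),
    Lz \in unitmx /\ Rz \in unitmx /\
    \tr (lsubmx (Lz *m pid_mx r *m Rz) *m lsubmx (Lz *m pid_mx r *m Rz)) = 0.
Proof.
move=> rm h1.
have [/and3P [/eqP d0 /eqP rE /eqP m2] | hs] := boolP [&& d == 0, r == m & m == 2]%N.
  subst d r m; exists L2, 1%:M; split; first exact: L2_unit.
  by split; [exact: unitmx1 | exact: special_tr].
exists 1%:M, (perm_mx (perm (@ordS_inj (m + d)))); split; first exact: unitmx1.
split; first exact: unitmx_perm.
rewrite mul1mx /mxtrace big1 // => a _; rewrite mxE big1 // => b _.
rewrite [lsubmx _ a b]mxE [lsubmx _ b a]mxE !pid_perm_E /=.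
case e1: (_ && _); case e2: (_ && _); rewrite ?mul0r ?mulr0 //.
case/andP: e1 => ar /eqP e1; case/andP: e2 => br /eqP e2.
exfalso; apply: (arith_ok (ltn_ord a) (ltn_ord b) ar br rm h1 hs); by [].
Qed.


Lemma normalize m d (C : 'M[R]_(m, m + d)) : (d != 0)%N || (m != 1)%N ->
  exists A : 'M[R]_m, exists B : 'M[R]_(m + d),
    A \in unitmx /\ B \in unitmx /\
    \tr (lsubmx (A *m C *m B^T) *m lsubmx (A *m C *m B^T)) = 0.
Proof.
move=> h.
have [Lz [Rz [uL [uR htr]]]] := good_form (rank_leq_row C) h.
exists (Lz *m invmx (col_ebase C)), (invmx (row_ebase C) *m Rz)^T.
rewrite unitmx_tr !unitmx_mul !unitmx_inv uL uR col_ebase_unit row_ebase_unit.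
do 2 split => //.
have -> : Lz *m invmx (col_ebase C) *m C *m (invmx (row_ebase C) *m Rz)^T^T =
          Lz *m pid_mx (\rank C) *m Rz.
  rewrite trmxK -{2}(mulmx_ebase C) !mulmxA mulmxKV ?col_ebase_unit //.
  by rewrite -[_ *m row_ebase C *m _]mulmxA mulmxV ?row_ebase_unit // mulmx1.
exact: htr.
Qed.

End GF.

Section Full.
Variable R : realType.

Lemma blk0 m : block_mx 0 0 0 (1%:M : 'M[R]_0) = 0 :> 'M[R]_(m + 0).
Proof.
by rewrite [1%:M : 'M[R]_0]flatmx0 block_mx0.
Qed.

Lemma iso_mul n p q (X : 'M[R]_(p, q)) (Y : 'M[R]_(q, n)) (G : 'M[R]_n) :
  X *m Y *m G *m (X *m Y)^T = X *m (Y *m G *m Y^T) *m X^T.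
Proof. by rewrite trmx_mul !mulmxA. Qed.

Lemma core_full n m d (F : 'M[R]_n) (Ub : 'M[R]_(m, n)) (Wb : 'M[R]_(m + d, n))
  (Bc : 'M[R]_(n, m + (m + d))) :
  col_mx Ub Wb *m Bc = 1%:M -> Bc *m col_mx Ub Wb = 1%:M -> F^T = - F ->
  Wb *m F *m Wb^T = 0 -> (d != 0)%N || (m != 1)%N ->
  exists G : 'M[R]_n,
  scalar_product G /\ has_index G d /\ l2dot G F F = 0 /\
  Ub *m G *m Ub^T = 0 /\ (d = 0%N -> Wb *m G *m Wb^T = 0).
Proof.
move=> PB BP Fskew Wiso h.
have [A [B [uA [uB htr]]]] := normalize (Ub *m F *m Wb^T) h.
set D := block_mx A 0 0 B.
set Di := block_mx (invmx A) 0 0 (invmx B).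
have DDi : D *m Di = 1%:M.
  by rewrite /D /Di mulmx_block !mulmx0 !mul0mx !addr0 !add0r !mulmxV // -scalar_mx_block.
have DiD : Di *m D = 1%:M.
  by rewrite /D /Di mulmx_block !mulmx0 !mul0mx !addr0 !add0r !mulVmx // -scalar_mx_block.
have EP : col_mx (A *m Ub) (B *m Wb) = D *m col_mx Ub Wb.
  by rewrite /D mul_block_col !mul0mx addr0 add0r.
have PB' : col_mx (A *m Ub) (B *m Wb) *m (Bc *m Di) = 1%:M.
  by rewrite EP -mulmxA (mulmxA _ Bc) PB mul1mx.
have BP' : (Bc *m Di) *m col_mx (A *m Ub) (B *m Wb) = 1%:M.
  by rewrite EP -mulmxA (mulmxA Di) DiD mul1mx.
have Wiso' : (B *m Wb) *m F *m (B *m Wb)^T = 0.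
  rewrite trmx_mul !mulmxA.
  have -> : B *m Wb *m F *m Wb^T = B *m (Wb *m F *m Wb^T) by rewrite !mulmxA.
  by rewrite Wiso mulmx0 mul0mx.
have Ntr' : \tr (lsubmx ((A *m Ub) *m F *m (B *m Wb)^T) *m lsubmx ((A *m Ub) *m F *m (B *m Wb)^T)) = 0.
  by move: htr; rewrite !trmx_mul !mulmxA.
have [G [sG [iG [lG [uG wG]]]]] := core_all PB' BP' Fskew Wiso' Ntr'.
exists G; do 3 (split => //); split.
  have -> : Ub = invmx A *m (A *m Ub) by rewrite mulKmx.
  by rewrite iso_mul uG mulmx0 mul0mx.
move=> d0; subst d.
have -> : Wb = invmx B *m (B *m Wb) by rewrite mulKmx.
by rewrite iso_mul wG blk0 mulmx0 mul0mx.
Qed.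

End Full.
Section Iso.
Variable R : realType.

Lemma scal11 (s : 'M[R]_1) : s^T = - s -> s = 0.
Proof.
move=> h; apply/matrixP => i j; rewrite (ord1 i) (ord1 j) mxE.
have := congr1 (fun M : 'M[R]_1 => M 0 0) h; rewrite !mxE => e.
lra.
Qed.

Lemma iso_step n (F W : 'M[R]_n) : F^T = - F -> W *m F *m W^T = 0 ->
  (2 * \rank W < n)%N -> exists W' : 'M[R]_n, W' *m F *m W'^T = 0 /\ (\rank W < \rank W')%N.
Proof.
move=> Fs Wi lt.
set K := kermx (F *m W^T).
have rK : (n - \rank W <= \rank K)%N.
  by rewrite mxrank_ker; apply: leq_sub2l; rewrite -[X in (_ <= X)%N](mxrank_tr W) mxrankM_maxr.
have nKW : ~~ (K <= W)%MS.
  by apply/negP => /mxrankS; lia.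
have [i ni] := row_subPn nKW.
set v := row i K.
have vK : (v *m (F *m W^T) == 0) by rewrite -sub_kermx row_sub.
have vFW : v *m F *m W^T = 0 by apply/eqP; rewrite -mulmxA.
exists (W + v)%MS; split.
  have /submxP [X ->] : ((W + v)%MS <= col_mx W v)%MS by rewrite addsmxE.
  rewrite trmx_mul !mulmxA -[X *m _ *m F *m _]mulmxA -[X *m _ *m _]mulmxA.
  rewrite (mulmxA (col_mx W v)).
  suff -> : col_mx W v *m F *m (col_mx W v)^T = 0 by rewrite mulmx0 mul0mx.
  rewrite tr_col_mx mul_col_mx mul_col_row Wi vFW.
  have -> : W *m F *m v^T = 0.
    by apply: trmx_inj; rewrite !trmx_mul trmxK Fs mulNmx mulmxN mulmxA vFW oppr0 trmx0.
  have -> : v *m F *m v^T = 0.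
    by apply: scal11; rewrite !trmx_mul trmxK Fs mulNmx mulmxN mulmxA.
  exact: block_mx0.
have : (W < W + v)%MS.
  rewrite ltmxE addsmxSl /=; apply: contra ni => h.
  exact: submx_trans (addsmxSr W v) h.
by rewrite ltmxErank => /andP [].
Qed.


Lemma iso_exists n (F : 'M[R]_n) : F^T = - F ->
  exists W : 'M[R]_n, W *m F *m W^T = 0 /\ (n <= 2 * \rank W)%N.
Proof.
move=> Fs.
suff H : forall j, exists W : 'M[R]_n, W *m F *m W^T = 0 /\
                    ((n <= 2 * \rank W)%N \/ (j <= \rank W)%N).
  have [W [Wi [h|h]]] := H n; exists W; split => //; lia.
elim=> [|j [W [Wi h]]].
  by exists 0; rewrite mul0mx mul0mx; split => //; right.
have [le|lt] := leqP n (2 * \rank W).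
  by exists W; split => //; left.
have [W' [W'i rW']] := iso_step Fs Wi lt.
exists W'; split => //; case: h => h; lia.
Qed.

Lemma sub_basis n (W : 'M[R]_n) k : (k <= \rank W)%N ->
  exists Wb : 'M[R]_(k, n), row_free Wb /\ (Wb <= W)%MS.
Proof.
move=> kr; exists (pid_mx k *m row_base W); split.
  by rewrite /row_free mxrankMfree ?row_base_free // rank_pid_mx.
by rewrite (submx_trans (submxMl _ _)) // eq_row_base.
Qed.

Lemma inv_of_full k n (P : 'M[R]_(k, n)) : row_full P -> k = n ->
  exists B : 'M[R]_(n, k), P *m B = 1%:M /\ B *m P = 1%:M.
Proof.
move=> full kn; exists (pinvmx P); split.
  apply: mulmxVp; rewrite /row_free; move: full; rewrite /row_full => /eqP ->.
  by rewrite kn.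
by rewrite -[pinvmx P]mul1mx mulmxKpV // submx_full.
Qed.


Lemma compl_basis n k m (Wb : 'M[R]_(k, n)) : row_free Wb -> (m + k = n)%N ->
  exists Ub : 'M[R]_(m, n), exists Bc : 'M[R]_(n, m + k),
    col_mx Ub Wb *m Bc = 1%:M /\ Bc *m col_mx Ub Wb = 1%:M.
Proof.
move=> fW e.
have rC : \rank (Wb^C)%MS = m.
  by rewrite mxrank_compl; move: fW; rewrite /row_free => /eqP ->; lia.
have [Ub [fU sU]] := sub_basis (k:=m) (W := (Wb^C)%MS) (eq_leq (esym rC)).
exists Ub.
have eU : (Ub == Wb^C)%MS.
  rewrite -(mxrank_leqif_eq sU) rC; move: fU; rewrite /row_free => /eqP ->; done.
apply: inv_of_full => //.
rewrite /row_full -addsmxE.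
rewrite (adds_eqmx (eqmxP eU) (eqmx_refl Wb)) addsmxC.
exact: addsmx_compl_full.
Qed.

End Iso.

Section Final.
Variable R : realType.

Lemma part1 n (F : 'M[R]_n) : n != 2%N -> two_form F ->
  exists G : 'M[R]_n,
    scalar_product G /\ (has_index G 0 \/ has_index G 1) /\ l2dot G F F = 0.
Proof.
move=> n2 Fs; rewrite /two_form in Fs.
have [W [Wi rW]] := iso_exists Fs.
set m := (n %/ 2)%N; set d := (n %% 2)%N.
have en : (m + (m + d) = n)%N by rewrite /m /d; lia.
have [Wb [fW sW]] := sub_basis (k := (m + d)%N) (W := W) (ltac:(rewrite /m /d; lia)).
have Wbi : Wb *m F *m Wb^T = 0.
  by case/submxP: sW => X ->; rewrite iso_mul Wi mulmx0 mul0mx.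
have [Ub [Bc [PB BP]]] := compl_basis fW en.
have h : (d != 0)%N || (m != 1)%N by rewrite /m /d; apply/orP; lia.
have [G [sG [iG [lG _]]]] := core_full PB BP Fs Wbi h.
exists G; split => //; split => //.
have : (d = 0 \/ d = 1)%N by rewrite /d; lia.
by case=> e; rewrite e in iG; [left | right].
Qed.

Lemma part2 n (F : 'M[R]_n) : n != 2%N -> two_form F ->
  forall U W : 'M[R]_n,
      row_full (U + W)%MS -> (U :&: W)%MS = 0 -> \rank U = \rank W ->
      in_wedge U W F ->
      exists G : 'M[R]_n,
        scalar_product G /\ (has_index G 0 \/ has_index G 1) /\
        l2dot G F F = 0 /\ isotropic G U /\ isotropic G W.
Proof.
move=> n2 Fs U W full cap rUW [k [a [b [Wa [Ub0 EF]]]]]; rewrite /two_form in Fs.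
have rn : (\rank U + \rank U = n)%N.
  move: full; rewrite /row_full (mxrank_disjoint_sum cap) => /eqP; lia.
have Wi : W *m F *m W^T = 0.
  rewrite EF /wedge mulmx_sumr mulmx_suml big1 // => i _.
  rewrite mulmxBr mulmxBl !mulmxA Wa !mul0mx -mulmxA -trmx_mul Wa trmx0 mulmx0.
  by rewrite subr0.
have [Wb [fW sW]] := sub_basis (k := (\rank U + 0)%N) (W := W) (ltac:(lia)).
have eW : (Wb == W)%MS.
  by rewrite -(mxrank_leqif_eq sW); move: fW; rewrite /row_free => /eqP ->; lia.
have Wbi : Wb *m F *m Wb^T = 0.
  by case/submxP: sW => X ->; rewrite iso_mul Wi mulmx0 mul0mx.
have [Bc [PB BP]] : exists Bc : 'M[R]_(n, \rank U + (\rank U + 0)),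
    col_mx (row_base U) Wb *m Bc = 1%:M /\ Bc *m col_mx (row_base U) Wb = 1%:M.
  apply: inv_of_full; last lia.
  rewrite /row_full -addsmxE (adds_eqmx (eq_row_base U) (eqmxP eW)).
  exact: full.
have h : (0 != 0)%N || (\rank U != 1)%N by apply/orP; lia.
have [G [sG [iG [lG [uG wG]]]]] := core_full PB BP Fs Wbi h.
exists G; split => //; split; first by left.
split => //; split.
  have : (U <= row_base U)%MS by rewrite eq_row_base.
  by case/submxP => X ->; rewrite /isotropic iso_mul uG mulmx0 mul0mx.
have : (W <= Wb)%MS by move/eqmxP: eW => ->.
by case/submxP => X ->; rewrite /isotropic iso_mul (wG erefl) mulmx0 mul0mx.
Qed.

End Final.

Unset Implicit Arguments.

Theorem lemma1p1 (R : realType) (n : nat) (F : 'M[R]_n) :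
  n != 2%N -> two_form F ->
  (exists G : 'M[R]_n,
      scalar_product G /\ (has_index G 0 \/ has_index G 1) /\ l2dot G F F = 0) /\
  (forall U W : 'M[R]_n,
      row_full (U + W)%MS -> (U :&: W)%MS = 0 -> \rank U = \rank W ->
      in_wedge U W F ->
      exists G : 'M[R]_n,
        scalar_product G /\ (has_index G 0 \/ has_index G 1) /\
        l2dot G F F = 0 /\ isotropic G U /\ isotropic G W).
Proof.
move=> n2 Fs; split; [exact: part1 | exact: part2].
Qed.
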